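(* Let $A_1A_2A_3A_4$ be a convex quadrilateral in $\mathbb{R}^2$ and let $c>0$. Consider positive weights $(B_1)_{1234},(B_2)_{1234},(B_3)_{1234},(B_4)_{1234}$ (variable weights) for which the weighted floating case holds and the weighted Fermat–Torricelli point (the minimizer of $\sum_{i=1}^4 (B_i)_{1234}\|X-A_i\|$) is a fixed interior point $A_0$, and write $\alpha_{i0j}=\angle A_iA_0A_j$. Then the dynamic plasticity of this variable weighted Fermat–Torricelli tree of degree four is given by the three equations \[ (B_1)_{1234}^2+(B_2)_{1234}^2+2(B_1)_{1234}(B_2)_{1234}\cos\alpha_{102}=(B_3)_{1234}^2+(B_4)_{1234}^2+2(B_3)_{1234}(B_4)_{1234}\cos\alpha_{304}, \] \[ (B_1)_{1234}^2+(B_4)_{1234}^2+2(B_1)_{1234}(B_4)_{1234}\cos\alpha_{104}=(B_2)_{1234}^2+(B_3)_{1234}^2+2(B_2)_{1234}(B_3)_{1234}\cos\alpha_{203}, \] \[ (B_1)_{1234}+(B_2)_{1234}+(B_3)_{1234}+(B_4)_{1234}=c. \]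
   Context: The weighted floating case for weights $B_i$ at $A_i$ means $\left\|\sum_{j\ne i}B_j\vec u_{ij}\right\|>B_i$ for each $i$, where $\vec u_{kl}$ is the unit vector from $A_k$ to $A_l$; then the weighted Fermat–Torricelli point $A_0$ is not a vertex and satisfies $\sum_{i=1}^4B_i\vec u_{0i}=\vec 0$. The dynamic plasticity of a weighted Fermat–Torricelli tree of degree four is the set of quadruples of weights with fixed sum $c$ for which the weighted Fermat–Torricelli point (and hence the tree joining it to the four vertices) stays the same for the fixed quadrilateral. *)

(* Defs.v *)
From Stdlib Require Import Reals Lra.
Open Scope R_scope.

Definition pt := (R * R)%type.

Definition vsub (P Q : pt) : pt := (fst P - fst Q, snd P - snd Q).
Definition vadd (P Q : pt) : pt := (fst P + fst Q, snd P + snd Q).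
Definition vscale (a : R) (P : pt) : pt := (a * fst P, a * snd P).
Definition dot (P Q : pt) : R := fst P * fst Q + snd P * snd Q.
Definition vnorm (P : pt) : R := sqrt (dot P P).
Definition dist (P Q : pt) : R := vnorm (vsub Q P).
Definition cross (P Q : pt) : R := fst P * snd Q - snd P * fst Q.
Definition orient (P Q S : pt) : R := cross (vsub Q P) (vsub S P).

Definition unitv (Ak Al : pt) : pt := vscale (/ dist Ak Al) (vsub Al Ak).

Definition angle (Ai A0 Aj : pt) : R :=
  acos (dot (vsub Ai A0) (vsub Aj A0) / (vnorm (vsub Ai A0) * vnorm (vsub Aj A0))).

Definition convex_quad (A1 A2 A3 A4 : pt) : Prop :=
  (0 < orient A1 A2 A3 /\ 0 < orient A2 A3 A4 /\ 0 < orient A3 A4 A1 /\ 0 < orient A4 A1 A2)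
  \/
  (orient A1 A2 A3 < 0 /\ orient A2 A3 A4 < 0 /\ orient A3 A4 A1 < 0 /\ orient A4 A1 A2 < 0).

Definition interior_quad (A1 A2 A3 A4 X : pt) : Prop :=
  (0 < orient A1 A2 X /\ 0 < orient A2 A3 X /\ 0 < orient A3 A4 X /\ 0 < orient A4 A1 X)
  \/
  (orient A1 A2 X < 0 /\ orient A2 A3 X < 0 /\ orient A3 A4 X < 0 /\ orient A4 A1 X < 0).

Definition floating_case (A1 A2 A3 A4 : pt) (B1 B2 B3 B4 : R) : Prop :=
  vnorm (vadd (vscale B2 (unitv A1 A2)) (vadd (vscale B3 (unitv A1 A3)) (vscale B4 (unitv A1 A4)))) > B1 /\
  vnorm (vadd (vscale B1 (unitv A2 A1)) (vadd (vscale B3 (unitv A2 A3)) (vscale B4 (unitv A2 A4)))) > B2 /\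
  vnorm (vadd (vscale B1 (unitv A3 A1)) (vadd (vscale B2 (unitv A3 A2)) (vscale B4 (unitv A3 A4)))) > B3 /\
  vnorm (vadd (vscale B1 (unitv A4 A1)) (vadd (vscale B2 (unitv A4 A2)) (vscale B3 (unitv A4 A3)))) > B4.

Definition wft_fun (A1 A2 A3 A4 : pt) (B1 B2 B3 B4 : R) (X : pt) : R :=
  B1 * dist X A1 + B2 * dist X A2 + B3 * dist X A3 + B4 * dist X A4.

Definition is_wft_point (A1 A2 A3 A4 : pt) (B1 B2 B3 B4 : R) (X : pt) : Prop :=
  forall Y : pt, wft_fun A1 A2 A3 A4 B1 B2 B3 B4 X <= wft_fun A1 A2 A3 A4 B1 B2 B3 B4 Y.

Definition dynamic_plasticity (A1 A2 A3 A4 A0 : pt) (c : R) (B1 B2 B3 B4 : R) : Prop :=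
  0 < B1 /\ 0 < B2 /\ 0 < B3 /\ 0 < B4 /\
  floating_case A1 A2 A3 A4 B1 B2 B3 B4 /\
  B1 + B2 + B3 + B4 = c /\
  is_wft_point A1 A2 A3 A4 B1 B2 B3 B4 A0.

(* Main.v *)
Require Import Defs.
From Stdlib Require Import Reals.
From Stdlib Require Import Lra Psatz.
Open Scope R_scope.

Lemma sqrt_le_r (a r : R) : 0 <= r -> a <= r * r -> sqrt a <= r.
Proof. intros Hr Ha. rewrite <- (sqrt_square r Hr). apply sqrt_le_1_alt. exact Ha. Qed.

Lemma r_le_sqrt (a r : R) : r * r <= a -> r <= sqrt a.
Proof.
  intros Ha. destruct (Rle_lt_dec r 0) as [H|H].
  - pose proof (sqrt_pos a); lra.
  - rewrite <- (sqrt_square r) by lra. apply sqrt_le_1_alt. exact Ha.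
Qed.

Lemma lower_bd (dx dy n ex ey : R) : 0 < n -> n * n = dx*dx + dy*dy ->
  (dx*ex + dy*ey)/n <= sqrt (ex*ex + ey*ey).
Proof.
  intros Hn Hnn. apply r_le_sqrt.
  set (r := (dx*ex + dy*ey)/n).
  assert (Hr : r * n = dx*ex + dy*ey) by (unfold r; field; lra).
  assert (H : r*r*(n*n) <= (ex*ex+ey*ey)*(n*n)).
  { replace (r*r*(n*n)) with ((r*n)*(r*n)) by ring. rewrite Hr, Hnn.
    pose proof (Rle_0_sqr (dx*ey - dy*ex)) as Hs. unfold Rsqr in Hs. nra. }
  apply (Rmult_le_reg_r (n*n)); nra.
Qed.

Lemma upper_bd (dx dy n sx sy t : R) : 0 < n -> n * n = dx*dx + dy*dy ->
  sqrt ((dx - t*sx)*(dx - t*sx) + (dy - t*sy)*(dy - t*sy))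
  <= n - t*(dx*sx+dy*sy)/n + t*t*(sx*sx+sy*sy)/(2*n).
Proof.
  intros Hn Hnn.
  set (r := n - t*(dx*sx+dy*sy)/n + t*t*(sx*sx+sy*sy)/(2*n)).
  set (a := r - n).
  assert (Ha : 2*n*a = -2*t*(dx*sx+dy*sy) + t*t*(sx*sx+sy*sy)).
  { unfold a, r. field. lra. }
  apply sqrt_le_r.
  - assert (Hrn : r * n = (dx - t*sx/2)*(dx - t*sx/2) + (dy - t*sy/2)*(dy - t*sy/2) + t*t*(sx*sx+sy*sy)/4).
    { assert (Hrn' : r * n = n*n - t*(dx*sx+dy*sy) + t*t*(sx*sx+sy*sy)/2)
        by (unfold r; field; lra).
      rewrite Hrn', Hnn. field. }
    assert (0 <= r * n).
    { rewrite Hrn. pose proof (Rle_0_sqr (dx - t*sx/2)). pose proof (Rle_0_sqr (dy - t*sy/2)).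
      pose proof (Rle_0_sqr t). pose proof (Rle_0_sqr sx). pose proof (Rle_0_sqr sy).
      unfold Rsqr in *. nra. }
    nra.
  - replace r with (n + a) by (unfold a; ring). nra.
Qed.

Lemma vnorm_pos_sq (P : pt) : vnorm P * vnorm P = fst P * fst P + snd P * snd P.
Proof. unfold vnorm, dot. apply sqrt_sqrt. nra. Qed.

Lemma cos_angle (Ai A0 Aj : pt) :
  0 < vnorm (vsub Ai A0) -> 0 < vnorm (vsub Aj A0) ->
  cos (angle Ai A0 Aj) =
    (fst (vsub Ai A0) / vnorm (vsub Ai A0)) * (fst (vsub Aj A0) / vnorm (vsub Aj A0)) +
    (snd (vsub Ai A0) / vnorm (vsub Ai A0)) * (snd (vsub Aj A0) / vnorm (vsub Aj A0)).
Proof.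
  intros Hi Hj. unfold angle.
  pose proof (vnorm_pos_sq (vsub Ai A0)) as Ei.
  pose proof (vnorm_pos_sq (vsub Aj A0)) as Ej.
  set (P := vsub Ai A0) in *. set (Q := vsub Aj A0) in *.
  set (ni := vnorm P) in *. set (nj := vnorm Q) in *.
  unfold dot.
  set (D := fst P * fst Q + snd P * snd Q).
  set (N := ni * nj).
  assert (HN : 0 < N) by (unfold N; nra).
  assert (HD : D * D <= N * N).
  { unfold N. replace (ni*nj*(ni*nj)) with ((ni*ni)*(nj*nj)) by ring.
    rewrite Ei, Ej. unfold D.
    pose proof (Rle_0_sqr (fst P * snd Q - snd P * fst Q)) as Hs. unfold Rsqr in Hs. nra. }
  assert (HD2 : - N <= D <= N) by nra.
  rewrite cos_acos.
  - unfold D, N. field. lra.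
  - split; apply (Rmult_le_reg_r N); try lra; unfold Rdiv;
      rewrite Rmult_assoc, Rinv_l by lra; lra.
Qed.

Lemma alg (B1 B2 B3 B4 p1 q1 p2 q2 p3 q3 p4 q4 : R) :
  p1*p1+q1*q1 = 1 -> p2*p2+q2*q2 = 1 -> p3*p3+q3*q3 = 1 -> p4*p4+q4*q4 = 1 ->
  B3*B4*(p3*q4-q3*p4) + B2*B3*(p2*q3-q2*p3) + B1*B4*(p4*q1-q4*p1) + B1*B2*(p1*q2-q1*p2) <> 0 ->
  ((B1^2+B2^2+2*B1*B2*(p1*p2+q1*q2) = B3^2+B4^2+2*B3*B4*(p3*p4+q3*q4) /\
    B1^2+B4^2+2*B1*B4*(p1*p4+q1*q4) = B2^2+B3^2+2*B2*B3*(p2*p3+q2*q3))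
   <-> (B1*p1+B2*p2+B3*p3+B4*p4 = 0 /\ B1*q1+B2*q2+B3*q3+B4*q4 = 0)).
Proof.
  intros H1 H2 H3 H4 HK.
  set (Sx := B1*p1+B2*p2+B3*p3+B4*p4). set (Sy := B1*q1+B2*q2+B3*q3+B4*q4).
  set (ax := B3*p3 - B1*p1). set (ay := B3*q3 - B1*q1).
  set (bx := B4*p4 - B2*p2). set (by' := B4*q4 - B2*q2).
  set (K := B3*B4*(p3*q4-q3*p4) + B2*B3*(p2*q3-q2*p3) + B1*B4*(p4*q1-q4*p1) + B1*B2*(p1*q2-q1*p2)) in *.
  assert (D1 : (B1^2+B2^2+2*B1*B2*(p1*p2+q1*q2)) - (B3^2+B4^2+2*B3*B4*(p3*p4+q3*q4))
     = -(Sx*(ax+bx) + Sy*(ay+by')) + B1^2*(1-(p1*p1+q1*q1)) + B2^2*(1-(p2*p2+q2*q2))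
       - B3^2*(1-(p3*p3+q3*q3)) - B4^2*(1-(p4*p4+q4*q4))).
  { unfold Sx, Sy, ax, ay, bx, by'. ring. }
  assert (D2 : (B1^2+B4^2+2*B1*B4*(p1*p4+q1*q4)) - (B2^2+B3^2+2*B2*B3*(p2*p3+q2*q3))
     = -(Sx*(ax-bx) + Sy*(ay-by')) + B1^2*(1-(p1*p1+q1*q1)) + B4^2*(1-(p4*p4+q4*q4))
       - B2^2*(1-(p2*p2+q2*q2)) - B3^2*(1-(p3*p3+q3*q3))).
  { unfold Sx, Sy, ax, ay, bx, by'. ring. }
  rewrite H1, H2, H3, H4 in D1, D2.
  assert (EK : ax*by' - ay*bx = K) by (unfold ax, ay, bx, by', K; ring).
  assert (ESx : Sx*K = (Sx*ax+Sy*ay)*by' - (Sx*bx+Sy*by')*ay) by (rewrite <- EK; ring).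
  assert (ESy : Sy*K = (Sx*bx+Sy*by')*ax - (Sx*ax+Sy*ay)*bx) by (rewrite <- EK; ring).
  split.
  - intros [E1 E2].
    assert (Ha : Sx*ax+Sy*ay = 0) by lra.
    assert (Hb : Sx*bx+Sy*by' = 0) by lra.
    rewrite Ha, Hb in ESx, ESy.
    split.
    + destruct (Rmult_integral Sx K) as [h|h]; [lra|exact h|contradiction].
    + destruct (Rmult_integral Sy K) as [h|h]; [lra|exact h|contradiction].
  - intros [E1 E2]. rewrite E1, E2 in D1, D2. split; lra.
Qed.

Lemma pt_lower (Ai A0 Y : pt) : 0 < vnorm (vsub Ai A0) ->
  vnorm (vsub Ai A0) - (fst (vsub Ai A0) / vnorm (vsub Ai A0) * (fst Y - fst A0)
     + snd (vsub Ai A0) / vnorm (vsub Ai A0) * (snd Y - snd A0)) <= Defs.dist Y Ai.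
Proof.
  intros Hn. pose proof (vnorm_pos_sq (vsub Ai A0)) as E.
  destruct Ai as [ax ay], A0 as [ox oy], Y as [yx yy].
  unfold Defs.dist, vsub in *. simpl in *.
  set (n := vnorm (ax - ox, ay - oy)) in *.
  pose proof (lower_bd (ax-ox) (ay-oy) n (ax - yx) (ay - yy) Hn E) as L.
  unfold vnorm, dot. simpl.
  eapply Rle_trans; [|exact L].
  right. apply (Rmult_eq_reg_r n); [|lra]. unfold Rdiv.
  replace ((n - ((ax - ox) * / n * (yx - ox) + (ay - oy) * / n * (yy - oy))) * n)
    with (n*n - ((ax - ox) * (yx - ox) + (ay - oy) * (yy - oy))) by (field; lra).
  rewrite E. field. lra.
Qed.

Lemma pt_upper (Ai A0 : pt) (sx sy t : R) : 0 < vnorm (vsub Ai A0) ->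
  Defs.dist (fst A0 + t*sx, snd A0 + t*sy) Ai <=
  vnorm (vsub Ai A0) - t*(fst (vsub Ai A0) / vnorm (vsub Ai A0) * sx
     + snd (vsub Ai A0) / vnorm (vsub Ai A0) * sy) + t*t*(sx*sx+sy*sy)/(2*vnorm (vsub Ai A0)).
Proof.
  intros Hn. pose proof (vnorm_pos_sq (vsub Ai A0)) as E.
  destruct Ai as [ax ay], A0 as [ox oy].
  unfold Defs.dist, vsub in *. simpl in *.
  set (n := vnorm (ax - ox, ay - oy)) in *.
  pose proof (upper_bd (ax-ox) (ay-oy) n sx sy t Hn E) as L.
  unfold vnorm, dot. simpl.
  replace (ax - (ox + t*sx)) with (ax - ox - t*sx) by ring.
  replace (ay - (oy + t*sy)) with (ay - oy - t*sy) by ring.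
  eapply Rle_trans; [exact L|].
  right. field. lra.
Qed.

Definition ux (A A0 : pt) : R := fst (vsub A A0) / vnorm (vsub A A0).
Definition uy (A A0 : pt) : R := snd (vsub A A0) / vnorm (vsub A A0).

Lemma minim (A1 A2 A3 A4 A0 : pt) (B1 B2 B3 B4 : R) :
  0 < B1 -> 0 < B2 -> 0 < B3 -> 0 < B4 ->
  0 < vnorm (vsub A1 A0) -> 0 < vnorm (vsub A2 A0) ->
  0 < vnorm (vsub A3 A0) -> 0 < vnorm (vsub A4 A0) ->
  (is_wft_point A1 A2 A3 A4 B1 B2 B3 B4 A0 <->
   (B1*ux A1 A0 + B2*ux A2 A0 + B3*ux A3 A0 + B4*ux A4 A0 = 0 /\
    B1*uy A1 A0 + B2*uy A2 A0 + B3*uy A3 A0 + B4*uy A4 A0 = 0)).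
Proof.
  intros HB1 HB2 HB3 HB4 Hn1 Hn2 Hn3 Hn4.
  set (Sx := B1*ux A1 A0 + B2*ux A2 A0 + B3*ux A3 A0 + B4*ux A4 A0).
  set (Sy := B1*uy A1 A0 + B2*uy A2 A0 + B3*uy A3 A0 + B4*uy A4 A0).
  unfold is_wft_point, wft_fun.
  assert (D1 : Defs.dist A0 A1 = vnorm (vsub A1 A0)) by reflexivity.
  assert (D2 : Defs.dist A0 A2 = vnorm (vsub A2 A0)) by reflexivity.
  assert (D3 : Defs.dist A0 A3 = vnorm (vsub A3 A0)) by reflexivity.
  assert (D4 : Defs.dist A0 A4 = vnorm (vsub A4 A0)) by reflexivity.
  rewrite D1, D2, D3, D4.
  split.
  - intros H.
    set (M := B1/(2*vnorm (vsub A1 A0)) + B2/(2*vnorm (vsub A2 A0))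
            + B3/(2*vnorm (vsub A3 A0)) + B4/(2*vnorm (vsub A4 A0))).
    assert (HM : 0 < M).
    { unfold M. repeat apply Rplus_lt_0_compat; apply Rdiv_lt_0_compat; lra. }
    set (t := / (2*M)).
    specialize (H (fst A0 + t*Sx, snd A0 + t*Sy)).
    pose proof (pt_upper A1 A0 Sx Sy t Hn1) as U1.
    pose proof (pt_upper A2 A0 Sx Sy t Hn2) as U2.
    pose proof (pt_upper A3 A0 Sx Sy t Hn3) as U3.
    pose proof (pt_upper A4 A0 Sx Sy t Hn4) as U4.
    apply (Rmult_le_compat_l B1) in U1; [|lra].
    apply (Rmult_le_compat_l B2) in U2; [|lra].
    apply (Rmult_le_compat_l B3) in U3; [|lra].
    apply (Rmult_le_compat_l B4) in U4; [|lra].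
    set (Q := Sx*Sx + Sy*Sy).
    set (f0 := B1 * vnorm (vsub A1 A0) + B2 * vnorm (vsub A2 A0) +
               B3 * vnorm (vsub A3 A0) + B4 * vnorm (vsub A4 A0)) in *.
    change (fst (vsub A1 A0) / vnorm (vsub A1 A0)) with (ux A1 A0) in U1.
    change (fst (vsub A2 A0) / vnorm (vsub A2 A0)) with (ux A2 A0) in U2.
    change (fst (vsub A3 A0) / vnorm (vsub A3 A0)) with (ux A3 A0) in U3.
    change (fst (vsub A4 A0) / vnorm (vsub A4 A0)) with (ux A4 A0) in U4.
    change (snd (vsub A1 A0) / vnorm (vsub A1 A0)) with (uy A1 A0) in U1.
    change (snd (vsub A2 A0) / vnorm (vsub A2 A0)) with (uy A2 A0) in U2.
    change (snd (vsub A3 A0) / vnorm (vsub A3 A0)) with (uy A3 A0) in U3.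
    change (snd (vsub A4 A0) / vnorm (vsub A4 A0)) with (uy A4 A0) in U4.
    set (n1 := vnorm (vsub A1 A0)) in *. set (n2 := vnorm (vsub A2 A0)) in *.
    set (n3 := vnorm (vsub A3 A0)) in *. set (n4 := vnorm (vsub A4 A0)) in *.
    set (p1 := ux A1 A0) in *. set (p2 := ux A2 A0) in *.
    set (p3 := ux A3 A0) in *. set (p4 := ux A4 A0) in *.
    set (q1 := uy A1 A0) in *. set (q2 := uy A2 A0) in *.
    set (q3 := uy A3 A0) in *. set (q4 := uy A4 A0) in *.
    assert (Id : B1 * (n1 - t * (p1 * Sx + q1 * Sy) + t * t * (Sx * Sx + Sy * Sy) / (2 * n1))
      + B2 * (n2 - t * (p2 * Sx + q2 * Sy) + t * t * (Sx * Sx + Sy * Sy) / (2 * n2))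
      + B3 * (n3 - t * (p3 * Sx + q3 * Sy) + t * t * (Sx * Sx + Sy * Sy) / (2 * n3))
      + B4 * (n4 - t * (p4 * Sx + q4 * Sy) + t * t * (Sx * Sx + Sy * Sy) / (2 * n4))
      = f0 - t * ((B1*p1+B2*p2+B3*p3+B4*p4) * Sx + (B1*q1+B2*q2+B3*q3+B4*q4) * Sy)
        + t * t * Q * M).
    { unfold f0, Q, M. field. repeat split; lra. }
    change (B1*p1+B2*p2+B3*p3+B4*p4) with Sx in Id.
    change (B1*q1+B2*q2+B3*q3+B4*q4) with Sy in Id.
    assert (Id2 : f0 - t * (Sx * Sx + Sy * Sy) + t * t * Q * M = f0 - Q / (4*M)).
    { unfold Q, t. field. lra. }
    assert (HQ : Q / (4*M) <= 0) by lra.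
    assert (HQ' : Q <= 0).
    { destruct (Rle_lt_dec Q 0) as [h|h]; [exact h|].
      assert (0 < Q / (4*M)) by (apply Rdiv_lt_0_compat; lra). lra. }
    unfold Q in HQ'. split; nra.
  - intros [Hx Hy] Y.
    pose proof (pt_lower A1 A0 Y Hn1) as L1.
    pose proof (pt_lower A2 A0 Y Hn2) as L2.
    pose proof (pt_lower A3 A0 Y Hn3) as L3.
    pose proof (pt_lower A4 A0 Y Hn4) as L4.
    apply (Rmult_le_compat_l B1) in L1; [|lra].
    apply (Rmult_le_compat_l B2) in L2; [|lra].
    apply (Rmult_le_compat_l B3) in L3; [|lra].
    apply (Rmult_le_compat_l B4) in L4; [|lra].
    set (e := fst Y - fst A0) in *. set (f := snd Y - snd A0) in *.
    assert (Id : B1 * (vnorm (vsub A1 A0) - (fst (vsub A1 A0) / vnorm (vsub A1 A0) * e +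
         snd (vsub A1 A0) / vnorm (vsub A1 A0) * f))
      + B2 * (vnorm (vsub A2 A0) - (fst (vsub A2 A0) / vnorm (vsub A2 A0) * e +
         snd (vsub A2 A0) / vnorm (vsub A2 A0) * f))
      + B3 * (vnorm (vsub A3 A0) - (fst (vsub A3 A0) / vnorm (vsub A3 A0) * e +
         snd (vsub A3 A0) / vnorm (vsub A3 A0) * f))
      + B4 * (vnorm (vsub A4 A0) - (fst (vsub A4 A0) / vnorm (vsub A4 A0) * e +
         snd (vsub A4 A0) / vnorm (vsub A4 A0) * f))
      = B1 * vnorm (vsub A1 A0) + B2 * vnorm (vsub A2 A0) + B3 * vnorm (vsub A3 A0)
        + B4 * vnorm (vsub A4 A0) - (Sx * e + Sy * f)).
    { unfold Sx, Sy, ux, uy. ring. }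
    rewrite Hx, Hy in Id. lra.
Qed.

Lemma cos_angle' (Ai A0 Aj : pt) :
  0 < vnorm (vsub Ai A0) -> 0 < vnorm (vsub Aj A0) ->
  cos (angle Ai A0 Aj) = ux Ai A0 * ux Aj A0 + uy Ai A0 * uy Aj A0.
Proof. intros; apply cos_angle; assumption. Qed.

Lemma unit_u (A A0 : pt) : 0 < vnorm (vsub A A0) -> ux A A0 * ux A A0 + uy A A0 * uy A A0 = 1.
Proof.
  intros H. pose proof (vnorm_pos_sq (vsub A A0)) as E. unfold ux, uy.
  set (n := vnorm (vsub A A0)) in *.
  apply (Rmult_eq_reg_r (n*n)); [|nra].
  replace ((fst (vsub A A0) / n * (fst (vsub A A0) / n) + snd (vsub A A0) / n * (snd (vsub A A0) / n)) * (n * n))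
    with (fst (vsub A A0) * fst (vsub A A0) + snd (vsub A A0) * snd (vsub A A0)) by (field; lra).
  rewrite <- E. ring.
Qed.

Lemma cross_u (Ai Aj A0 : pt) : 0 < vnorm (vsub Ai A0) -> 0 < vnorm (vsub Aj A0) ->
  ux Ai A0 * uy Aj A0 - uy Ai A0 * ux Aj A0
  = orient Ai Aj A0 / (vnorm (vsub Ai A0) * vnorm (vsub Aj A0)).
Proof.
  intros Hi Hj. unfold ux, uy.
  set (ni := vnorm (vsub Ai A0)) in *. set (nj := vnorm (vsub Aj A0)) in *.
  unfold orient, cross, vsub. simpl. field. lra.
Qed.

Lemma npos (Ai Aj A0 : pt) : orient Ai Aj A0 <> 0 -> 0 < vnorm (vsub Ai A0).
Proof.
  intros H. unfold vnorm, dot. apply sqrt_lt_R0.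
  unfold orient, cross, vsub in *. simpl in *.
  destruct (Req_dec (fst Ai - fst A0) 0) as [h1|h1].
  - destruct (Req_dec (snd Ai - snd A0) 0) as [h2|h2].
    + exfalso. apply H.
      replace (fst Aj - fst Ai) with ((fst Aj - fst A0) - (fst Ai - fst A0)) by ring.
      replace (snd Aj - snd Ai) with ((snd Aj - snd A0) - (snd Ai - snd A0)) by ring.
      replace (fst A0 - fst Ai) with (-(fst Ai - fst A0)) by ring.
      replace (snd A0 - snd Ai) with (-(snd Ai - snd A0)) by ring.
      rewrite h1, h2. ring.
    + pose proof (Rle_0_sqr (fst Ai - fst A0)). unfold Rsqr in *.
      assert (0 < (snd Ai - snd A0) * (snd Ai - snd A0)).
      { apply Rsqr_pos_lt in h2. exact h2. } lra.
  - pose proof (Rle_0_sqr (snd Ai - snd A0)). unfold Rsqr in *.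
    assert (0 < (fst Ai - fst A0) * (fst Ai - fst A0)).
    { apply Rsqr_pos_lt in h1. exact h1. } lra.
Qed.

Theorem proposition2 (A1 A2 A3 A4 A0 : pt) (c : R) :
  0 < c ->
  convex_quad A1 A2 A3 A4 ->
  interior_quad A1 A2 A3 A4 A0 ->
  forall B1 B2 B3 B4 : R,
    0 < B1 -> 0 < B2 -> 0 < B3 -> 0 < B4 ->
    floating_case A1 A2 A3 A4 B1 B2 B3 B4 ->
    (dynamic_plasticity A1 A2 A3 A4 A0 c B1 B2 B3 B4 <->
     (B1 ^ 2 + B2 ^ 2 + 2 * B1 * B2 * cos (angle A1 A0 A2)
        = B3 ^ 2 + B4 ^ 2 + 2 * B3 * B4 * cos (angle A3 A0 A4) /\
      B1 ^ 2 + B4 ^ 2 + 2 * B1 * B4 * cos (angle A1 A0 A4)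
        = B2 ^ 2 + B3 ^ 2 + 2 * B2 * B3 * cos (angle A2 A0 A3) /\
      B1 + B2 + B3 + B4 = c)).
Proof.
  intros Hc Hconv Hint B1 B2 B3 B4 HB1 HB2 HB3 HB4 Hfl.
  assert (Ho : orient A1 A2 A0 <> 0 /\ orient A2 A3 A0 <> 0 /\
               orient A3 A4 A0 <> 0 /\ orient A4 A1 A0 <> 0).
  { destruct Hint as [[h1 [h2 [h3 h4]]]|[h1 [h2 [h3 h4]]]]; repeat split; lra. }
  destruct Ho as [Ho1 [Ho2 [Ho3 Ho4]]].
  pose proof (npos _ _ _ Ho1) as Hn1. pose proof (npos _ _ _ Ho2) as Hn2.
  pose proof (npos _ _ _ Ho3) as Hn3. pose proof (npos _ _ _ Ho4) as Hn4.
  rewrite (cos_angle' A1 A0 A2 Hn1 Hn2), (cos_angle' A3 A0 A4 Hn3 Hn4),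
          (cos_angle' A1 A0 A4 Hn1 Hn4), (cos_angle' A2 A0 A3 Hn2 Hn3).
  pose proof (cross_u A1 A2 A0 Hn1 Hn2) as C12.
  pose proof (cross_u A2 A3 A0 Hn2 Hn3) as C23.
  pose proof (cross_u A3 A4 A0 Hn3 Hn4) as C34.
  pose proof (cross_u A4 A1 A0 Hn4 Hn1) as C41.
  assert (HK : B3*B4*(ux A3 A0 * uy A4 A0 - uy A3 A0 * ux A4 A0)
             + B2*B3*(ux A2 A0 * uy A3 A0 - uy A2 A0 * ux A3 A0)
             + B1*B4*(ux A4 A0 * uy A1 A0 - uy A4 A0 * ux A1 A0)
             + B1*B2*(ux A1 A0 * uy A2 A0 - uy A1 A0 * ux A2 A0) <> 0).
  { rewrite C12, C23, C34, C41.
    set (n1 := vnorm (vsub A1 A0)) in *. set (n2 := vnorm (vsub A2 A0)) in *.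
    set (n3 := vnorm (vsub A3 A0)) in *. set (n4 := vnorm (vsub A4 A0)) in *.
    assert (P12 : 0 < n1*n2) by nra. assert (P23 : 0 < n2*n3) by nra.
    assert (P34 : 0 < n3*n4) by nra. assert (P41 : 0 < n4*n1) by nra.
    assert (0 < B3*B4) by nra. assert (0 < B2*B3) by nra.
    assert (0 < B1*B4) by nra. assert (0 < B1*B2) by nra.
    destruct Hint as [[h1 [h2 [h3 h4]]]|[h1 [h2 [h3 h4]]]].
    - assert (0 < orient A1 A2 A0 / (n1*n2)) by (apply Rdiv_lt_0_compat; lra).
      assert (0 < orient A2 A3 A0 / (n2*n3)) by (apply Rdiv_lt_0_compat; lra).
      assert (0 < orient A3 A4 A0 / (n3*n4)) by (apply Rdiv_lt_0_compat; lra).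
      assert (0 < orient A4 A1 A0 / (n4*n1)) by (apply Rdiv_lt_0_compat; lra).
      set (c1 := orient A1 A2 A0 / (n1*n2)) in *.
      set (c2 := orient A2 A3 A0 / (n2*n3)) in *.
      set (c3 := orient A3 A4 A0 / (n3*n4)) in *.
      set (c4 := orient A4 A1 A0 / (n4*n1)) in *.
      nra.
    - assert (0 < - orient A1 A2 A0 / (n1*n2)) by (apply Rdiv_lt_0_compat; lra).
      assert (0 < - orient A2 A3 A0 / (n2*n3)) by (apply Rdiv_lt_0_compat; lra).
      assert (0 < - orient A3 A4 A0 / (n3*n4)) by (apply Rdiv_lt_0_compat; lra).
      assert (0 < - orient A4 A1 A0 / (n4*n1)) by (apply Rdiv_lt_0_compat; lra).
      unfold Rdiv in *. rewrite <- !Ropp_mult_distr_l in *.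
      set (c1 := orient A1 A2 A0 * / (n1*n2)) in *.
      set (c2 := orient A2 A3 A0 * / (n2*n3)) in *.
      set (c3 := orient A3 A4 A0 * / (n3*n4)) in *.
      set (c4 := orient A4 A1 A0 * / (n4*n1)) in *.
      nra. }
  pose proof (alg B1 B2 B3 B4 (ux A1 A0) (uy A1 A0) (ux A2 A0) (uy A2 A0)
     (ux A3 A0) (uy A3 A0) (ux A4 A0) (uy A4 A0)
     (unit_u A1 A0 Hn1) (unit_u A2 A0 Hn2) (unit_u A3 A0 Hn3) (unit_u A4 A0 Hn4) HK) as HA.
  pose proof (minim A1 A2 A3 A4 A0 B1 B2 B3 B4 HB1 HB2 HB3 HB4 Hn1 Hn2 Hn3 Hn4) as HM.
  unfold dynamic_plasticity. split.
  - intros [_ [_ [_ [_ [_ [Hs Hw]]]]]].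
    apply HM in Hw. apply HA in Hw. destruct Hw. tauto.
  - intros [E1 [E2 Hs]].
    assert (Hw : is_wft_point A1 A2 A3 A4 B1 B2 B3 B4 A0) by (apply HM; apply HA; tauto).
    tauto.
Qed.
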